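(* For each $\mu\in \mathcal{M}^*(X)$, the set $(\pi_{f*})^{-1}(\mu)$ consists of a single point, which we denote by $\mu_f$. The map $\mathcal{M}^*(X)\rightarrow \mathcal{M}(X_f)$ sending $\mu$ to $\mu_f$ is continuous.
   Context: Let $\Gamma$ (countably infinite) act minimally and continuously on a compact metrizable space $X$ which consists of more than one orbit. Let $x_1\in X$ have trivial stabilizer, and let $f:X\setminus\{x_1\}\to\{1,-1\}$ be continuous but not continuously extendable to $X$. McMahon's construction gives a minimal action $\Gamma\curvearrowright X_f$ on a compact metrizable space and a factor map $\pi_f:X_f\to X$ such that $\pi_f^{-1}(x)$ is one point for $x\notin\Gamma x_1$ and two points for $x\in\Gamma x_1$, and $f\circ\pi_f$ extends continuously to $X_f$. For a compact metrizable space $W$, $\mathcal{M}(W)$ denotes the space of Borel probability measures on $W$ with the weak$^*$-topology; $\mathcal{M}^*(X)$ is the set of nonatomic $\mu\in\mathcal{M}(X)$ (i.e. $\mu(\{x\})=0$ for all $x$), and $\pi_{f*}:\mathcal{M}(X_f)\to\mathcal{M}(X)$ is the continuous surjection induced by $\pi_f$. *)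

(* Defs.v *)
From HB Require Import structures.
From mathcomp Require Import all_boot all_order all_algebra.
From mathcomp Require Import all_classical all_reals all_analysis.
Set Implicit Arguments. Unset Strict Implicit. Unset Printing Implicit Defensive.
Import Order.TTheory GRing.Theory Num.Theory.
Import numFieldNormedType.Exports.
Local Open Scope classical_set_scope.
Local Open Scope ring_scope.

Notation borel T := (g_sigma_algebraType (@open T)).

Notation prob T R := (probability (borel T) R).

Section group_actions.
Context (G : groupType) (T : topologicalType).

Definition is_action (act : G -> T -> T) : Prop :=
  [/\ (forall x, act 1%g x = x),
      (forall g h x, act (g * h)%g x = act g (act h x)) &
      (forall g, continuous (act g))].

Definition gorbit (act : G -> T -> T) (x : T) : set T :=
  [set act g x | g in [set: G]].

Definition invariant_set (act : G -> T -> T) (A : set T) : Prop :=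
  forall g x, A x -> A (act g x).

Definition minimal_action (act : G -> T -> T) : Prop :=
  forall A : set T, closed A -> invariant_set act A -> A !=set0 -> A = [set: T].
End group_actions.

Section measures.
Context (R : realType).

Definition integ (T : ptopologicalType) (P : prob T R) (g : T -> R) : R :=
  fine (\int[P]_x (g x)%:E)%E.

Definition nonatomic (T : ptopologicalType) (P : prob T R) : Prop :=
  forall x : T, P [set x] = 0%E.

Definition pushes (Y X : ptopologicalType) (pi : Y -> X)
  (nu : prob Y R) (mu : prob X R) : Prop :=
  forall A : set (borel X), measurable A -> nu (pi @^-1` A) = mu A.

Definition same_measure (T : ptopologicalType) (P Q : prob T R) : Prop :=
  forall A : set (borel T), measurable A -> P A = Q A.

(** Continuity of Phi : S -> M(Y) (S a subset of M(X)) for the weak-* topologies,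
    i.e. the initial topologies of the maps nu |-> \int g dnu, g in C(W), with
    the subspace topology on S; stated via the basic weak-* neighbourhoods. *)
Definition weak_continuous_on (X Y : ptopologicalType) (S : set (prob X R))
  (Phi : prob X R -> prob Y R) : Prop :=
  forall mu, S mu ->
  forall (n : nat) (gs : 'I_n -> Y -> R) (eps : R),
    (forall i, continuous (gs i)) -> 0 < eps ->
    exists (m : nat) (hs : 'I_m -> X -> R) (del : R),
      [/\ (forall j, continuous (hs j)), 0 < del &
        forall mu', S mu' ->
          (forall j, `|integ mu' (hs j) - integ mu (hs j)| < del) ->
          forall i, `|integ (Phi mu') (gs i) - integ (Phi mu) (gs i)| < eps].
End measures.

(* Main.v *)
Require Import Defs.
From HB Require Import structures.
From mathcomp Require Import all_boot all_order all_algebra.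
From mathcomp Require Import all_classical all_reals all_analysis.
From mathcomp Require Import measurable_realfun.
From mathcomp Require Import ring lra.
Import Order.TTheory GRing.Theory Num.Theory.
Import numFieldNormedType.Exports.
Local Open Scope classical_set_scope.
Local Open Scope ring_scope.
Section basics.
Context {R : realType}.

Lemma open_mble (T : ptopologicalType) (U : set T) : open U -> measurable (U : set (borel T)).
Proof. by move=> oU; apply: sub_sigma_algebra. Qed.

Lemma closed_mble (T : ptopologicalType) (U : set T) : closed U -> measurable (U : set (borel T)).
Proof.
move=> cU; rewrite -(setCK U); apply: measurableC; apply: open_mble.
exact: closed_openC.
Qed.

Lemma cont_mfun (T U : ptopologicalType) (f : T -> U) : continuous f ->
  measurable_fun [set: borel T] (f : borel T -> borel U).
Proof.
move=> cf; apply: (@measurability _ _ (borel T) (borel U) setT f (@open U) erefl).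
move=> _ [V oV <-]; apply: measurableI => //; apply: open_mble.
exact: (proj1 (continuousP f) cf).
Qed.

Lemma cont_mfunR (T : ptopologicalType) (f : T -> R) : continuous f ->
  measurable_fun [set: borel T] f.
Proof.
move=> cf; apply: (measurability _ (RGenOpens.measurableE R)).
move=> _ [_ [a [b ->] <-]]; apply: measurableI => //; apply: open_mble.
apply: (proj1 (continuousP f) cf); exact: interval_open.
Qed.
Lemma measureD0 d (T : measurableType d) (m : {measure set T -> \bar R}) A B :
  measurable A -> measurable B -> m B = 0%E -> m A = m (A `\` B).
Proof.
move=> mA mB mB0; rewrite (measureDI m mA mB) [X in (_ + X)%E](_ : _ = 0%E) ?adde0 //.
apply/eqP; rewrite -measure_le0; apply: (@le_trans _ _ (m B)); last by rewrite mB0.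
apply: le_measure; rewrite ?inE//.
exact: measurableI.
Qed.
End basics.


Section env.
Context {R : realType} {X : pseudoPMetricType R}.

Definition mn (r : R) : R := if r <= 1 then r else 1.

Lemma mn_le1 r : mn r <= 1.
Proof. by rewrite /mn; case: ifP => // _; rewrite lexx. Qed.

Lemma mn_ge0 r : 0 <= r -> 0 <= mn r.
Proof. by rewrite /mn; case: ifP => // _ _; rewrite ler01. Qed.

Lemma mn_le r : mn r <= r.
Proof. by rewrite /mn; case: ifPn => [_|]; rewrite ?lexx // -ltNge => /ltW. Qed.

Lemma mn_lt1 r : mn r < 1 -> mn r = r.
Proof. by rewrite /mn; case: ifP => // _; rewrite ltxx. Qed.

Lemma mnle (r1 r2 r3 : R) : 0 <= r1 -> 0 <= r2 -> r3 <= r1 + r2 ->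
  mn r3 <= mn r1 + mn r2.
Proof.
move=> h1 h2 h3.
have m1 := mn_le1 r3; have m2 := mn_le r3.
have p1 := mn_ge0 _ h1; have p2 := mn_ge0 _ h2.
rewrite [mn r1]/mn [mn r2]/mn; case: (leP r1 1) => c1; case: (leP r2 1) => c2 /=; lra.
Qed.

Definition dd (x y : X) : R :=
  match edist (x, y) with EFin r => mn r | _ => 1 end.

Lemma dd_ge0 x y : 0 <= dd x y.
Proof.
rewrite /dd; have := edist_ge0 (x, y).
by case: (edist (x, y)) => [r||] /=; rewrite ?lee_fin => r0; rewrite ?mn_ge0 ?ler01.
Qed.

Lemma dd_le1 x y : dd x y <= 1.
Proof. by rewrite /dd; case: (edist (x, y)) => [r||]; rewrite ?mn_le1 ?lexx. Qed.

Lemma dd_refl x : dd x x = 0.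
Proof. by rewrite /dd edist_refl /= /mn ler01. Qed.

Lemma dd_sym x y : dd x y = dd y x.
Proof. by rewrite /dd edist_sym. Qed.

Lemma dd_tri x y z : dd x z <= dd x y + dd y z.
Proof.
move: (edist_ge0 (x,y)) (edist_ge0 (y,z)) (edist_ge0 (x,z)) (edist_triangle x y z).
rewrite /dd.
case: (edist (x,y)) => [r1||]; case: (edist (y,z)) => [r2||];
  case: (edist (x,z)) => [r3||] //=; rewrite ?lee_fin => h1 h2 h3 ht;
  rewrite ?leye_eq ?leeNy_eq // in h1 h2 h3 ht.
all: try (by apply: mnle => //; rewrite -lee_fin).
all: try (have := mn_ge0 _ h1); try (have := mn_ge0 _ h2);
  try (have := mn_le1 r3); try (have := mn_le1 r1); try (have := mn_le1 r2); lra.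
Qed.

Lemma dd_ball x y r : 0 < r -> ball x r y -> dd x y <= r.
Proof.
move=> r0 bxy; have := @edist_fin _ _ r (x, y) r0 bxy; rewrite /dd /=.
move: (edist_neqNy (x, y)); case: (edist (x,y)) => [r'||] //= _; rewrite ?lee_fin => h.
by apply: le_trans (mn_le _) h.
Qed.

Lemma ball_dd x y r : dd x y < r -> r <= 1 -> ball x r y.
Proof.
move=> h r1; apply: (@edist_lt_ball _ _ _ (x, y)); move: h; rewrite /dd /=.
move: (edist_neqNy (x, y)); case: (edist (x,y)) => [r'||] //= _ h.
  rewrite lte_fin; have : mn r' < 1 by lra.
  by move/mn_lt1 => e; move: h; rewrite e.
by exfalso; lra.
Qed.

Lemma mn_gt0 r : 0 < r -> 0 < mn r.
Proof. by rewrite /mn; case: ifP => // _ _; rewrite ltr01. Qed.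

Definition env (F : X -> R) (k : R) (x : X) : R :=
  sup [set F z - k * dd x z | z in [set: X]].

Section envF.
Variables (F : X -> R) (M : R).
Hypothesis hF : forall z, `|F z| <= M.

Lemma env_hs k x : 0 <= k -> has_sup [set F z - k * dd x z | z in [set: X]].
Proof.
move=> k0; split; first by exists (F x - k * dd x x); exists x.
exists M => _ [z _ <-]; have := hF z; have := ler_norm (F z).
have := mulr_ge0 k0 (dd_ge0 x z); lra.
Qed.

Lemma env_ge k x : 0 <= k -> F x <= env F k x.
Proof.
move=> k0; apply: sup_upper_bound (env_hs k x k0) _ _.
by exists x => //; rewrite dd_refl mulr0 subr0.
Qed.

Lemma env_le k x : 0 <= k -> env F k x <= M.
Proof.
move=> k0; apply: ge_sup; first by exists (F x - k * dd x x); exists x.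
move=> _ [z _ <-]; have := hF z; have := ler_norm (F z).
have := mulr_ge0 k0 (dd_ge0 x z); lra.
Qed.

Lemma env_lip k x y : 0 <= k -> env F k x <= env F k y + k * dd x y.
Proof.
move=> k0; apply: ge_sup; first by exists (F x - k * dd x x); exists x.
move=> _ [z _ <-].
have h1 : F z - k * dd y z <= env F k y.
  by apply: sup_upper_bound (env_hs k y k0) _ _; exists z.
have h2 : k * dd y z <= k * dd y x + k * dd x z.
  by rewrite -mulrDr; apply: ler_wpM2l => //; exact: dd_tri.
rewrite (dd_sym y x) in h2; lra.
Qed.

Lemma env_cont k : 0 <= k -> continuous (env F k).
Proof.
move=> k0 x; apply/cvgrPdist_lt => e e0.
have k1 : 0 < k + 1 by lra.
have ek : 0 < e / (k + 1) by exact: divr_gt0.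
apply/nbhs_ballP; exists (mn (e / (k + 1))); first exact: mn_gt0.
move=> y bxy /=.
have d1 := dd_ball _ _ _ (mn_gt0 _ ek) bxy.
have d2 := mn_le (e / (k + 1)).
have d3 : k * dd x y <= k * (e / (k + 1)) by apply: ler_wpM2l => //; lra.
have E : k * (e / (k + 1)) = e - e / (k + 1).
  by field; rewrite gt_eqF.
have l1 := env_lip k x y k0; have l2 := env_lip k y x k0.
rewrite (dd_sym y x) in l2.
rewrite ltr_norml; apply/andP; split; lra.
Qed.

Lemma env_pt x : {for x, continuous F} ->
  (fun n : nat => env F n%:R x) @ \oo --> F x.
Proof.
move=> cF; apply/cvgrPdist_lt => e e0.
have e2 : 0 < e / 2 by exact: divr_gt0.
have [r /= r0 hr] := (nbhs_ballP _ _).1 (proj1 (cvgrPdist_lt _ _) cF (e / 2) e2).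
have r'0 := mn_gt0 _ r0; have r'1 := mn_le1 r; have r'r := mn_le r.
have M0 : 0 <= M by apply: le_trans (hF x).
have N0 := truncnS_gt (2 * M / mn r).
exists (Num.Def.trunc (2 * M / mn r)).+1 => // n /= hn.
have hn' : 2 * M / mn r < n%:R.
  by apply: lt_le_trans N0 _; rewrite ler_nat.
have hn'' : 2 * M < n%:R * mn r by rewrite -ltr_pdivrMr.
have eg := env_ge n%:R x (ler0n _ _).
suff : env F n%:R x <= F x + e / 2.
  by move=> h; rewrite ltr_norml; apply/andP; split; lra.
apply: ge_sup; first by exists (F x - n%:R * dd x x); exists x.
move=> _ [z _ <-].
have nd := mulr_ge0 (ler0n _ n) (dd_ge0 x z).
have [bz|nbz] := pselect (ball x (mn r) z).
  have := hr z (le_ball r'r bz).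
  by rewrite ltr_norml => /andP[? ?]; lra.
have dz : mn r <= dd x z.
  by rewrite leNgt; apply/negP => h; apply: nbz; exact: ball_dd.
have : n%:R * mn r <= n%:R * dd x z by apply: ler_wpM2l => //; exact: ler0n.
have := hF z; have := ler_norm (F z); have := hF x; have := ler_norm (- F x).
rewrite normrN; lra.
Qed.

Lemma env_bnd k x : 0 <= k -> `|env F k x| <= M.
Proof.
move=> k0; rewrite ler_norml; apply/andP; split; last exact: env_le.
have := env_ge k x k0; have := ler_norm (- F x).
by rewrite normrN; have := hF x; lra.
Qed.

End envF.
End env.

Section integ_lemmas.
Context {R : realType} {T : pseudoPMetricType R}.

Lemma bnd_int (P : prob T R) (f : T -> R) M : measurable_fun [set: borel T] f ->
  (forall x, `|f x| <= M) -> P.-integrable setT (EFin \o f).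
Proof.
move=> mf hf; apply: measurable_bounded_integrable => //.
  by apply: (@le_lt_trans _ _ 1%E); [exact: probability_le1 | exact: ltry].
exists M; split; first by rewrite num_real.
by move=> M' hM' x _; apply: le_trans (hf x) (ltW hM').
Qed.

Lemma integ_le (P : prob T R) (f g : T -> R) M M' :
  measurable_fun [set: borel T] f -> (forall x, `|f x| <= M) ->
  measurable_fun [set: borel T] g -> (forall x, `|g x| <= M') ->
  (forall x, f x <= g x) -> integ P f <= integ P g.
Proof.
move=> mf hf mg hg fg; apply: le_Rintegral => //.
- exact: bnd_int hf.
- exact: bnd_int hg.
Qed.

Lemma integ_opp (P : prob T R) (f : T -> R) M :
  measurable_fun [set: borel T] f -> (forall x, `|f x| <= M) ->
  integ P (fun x => - f x) = - integ P f.
Proof.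
move=> mf hf.
have -> : (fun x => - f x) = (fun x => (-1) * f x).
  by apply: funext => x; rewrite mulN1r.
rewrite /integ.
have := @RintegralZl _ _ R P setT f (-1) measurableT (bnd_int P f M mf hf).
by rewrite mulN1r.
Qed.

Lemma env_int (P : prob T R) (F : T -> R) M (N : set T) :
  measurable (N : set (borel T)) -> P N = 0%E -> measurable_fun [set: borel T] F ->
  (forall z, `|F z| <= M) -> (forall x, ~ N x -> {for x, continuous F}) ->
  forall eta, 0 < eta -> exists n : nat, integ P (env F n%:R) < integ P F + eta.
Proof.
move=> mN PN mF hF cF eta eta0.
have menv n : measurable_fun [set: borel T] (env F n%:R).
  exact: cont_mfunR (env_cont F M hF _ (ler0n _ n)).
have benv n x : `|env F n%:R x| <= M.
  rewrite ler_norml; apply/andP; split; last exact: env_le.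
  have := env_ge F M hF n%:R x (ler0n _ n); have := ler_norm (- F x).
  by rewrite normrN; have := hF x; lra.
have mf_ : forall n, measurable_fun [set: borel T] (fun x => (env F n%:R x)%:E).
  by move=> n; apply/measurable_EFinP; exact: menv.
have mf' : measurable_fun [set: borel T] (fun x => (F x)%:E).
  by apply/measurable_EFinP.
have ff : \forall x \ae P, setT x -> (fun n => (env F n%:R x)%:E) @ \oo --> (F x)%:E.
  exists N; split => // x /= nx; apply: contrapT => nNx; apply: nx => _.
  apply: cvg_EFin; first exact: nearW.
  exact: env_pt (cF x nNx).
have ig : P.-integrable [set: borel T] (EFin \o cst M).
  exact: finite_measure_integrable_cst.
have fg : \forall x \ae P, forall n, setT x -> (`|(env F n%:R x)%:E| <= (EFin \o cst M) x)%E.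
  by apply: aeW => x n _; rewrite /= lee_fin.
have [_ _ dc] := dominated_convergence measurableT mf_ mf' ff ig fg.
have fin := integrable_fin_num measurableT (bnd_int P F M mF hF).
rewrite -(fineK fin) in dc.
have [_ hc] := (fine_cvgP _ _).1 dc.
have := (cvgrPdist_lt _ _).1 hc eta eta0.
move=> [N0 _ HN]; exists N0; have := HN N0 (leqnn N0).
rewrite /= /integ; rewrite ltr_norml => /andP [h _]; lra.
Qed.

End integ_lemmas.

Section part1.
Context (R : realType) (X Xf : pseudoPMetricType R) (pif : Xf -> X) (a : nat -> X).
Hypotheses (cpif : continuous pif) (hX : hausdorff_space X) (cXf : compact [set: Xf])
 (surj : forall x, exists y, pif y = x)
 (uniq : forall x, ~ range a x -> forall y y', pif y = x -> pif y' = x -> y = y').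

Definition sec x := projT1 (cid (surj x)).
Lemma secK x : pif (sec x) = x.
Proof. by rewrite /sec; case: cid. Qed.

Lemma set1_mble x : measurable ([set x] : set (borel X)).
Proof. apply: closed_mble; apply: compact_closed => //; exact: compact_set1. Qed.

Lemma subO_mble S : S `<=` range a -> measurable (S : set (borel X)).
Proof.
move=> SO.
have -> : S = \bigcup_n (S `&` [set a n]).
  apply/seteqP; split=> [x Sx|x [n _ [Sx _]]] //.
  by have [n _ an] := SO x Sx; exists n => //; split => //; rewrite an.
apply: bigcupT_measurable => n.
have [Sa|nSa] := pselect (S (a n)).
  have -> : S `&` [set a n] = [set a n].
    by apply/seteqP; split => [x []|x ->]//.
  exact: set1_mble.
have -> : S `&` [set a n] = set0.
  by apply/seteqP; split => [x [Sx xa]|x]//; apply: nSa; rewrite -xa.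
exact: measurable0.
Qed.

Lemma O_null (mu : prob X R) : nonatomic mu -> mu (range a) = 0%E.
Proof.
move=> na.
have : mu.-negligible (\bigcup_n [set a n]).
  apply: negligible_bigcup => n; exists [set a n]; split => //.
    exact: set1_mble.
  exact: na.
move=> [A [mA muA sA]].
apply/eqP; rewrite -measure_le0 -muA; apply: le_measure; rewrite ?inE //.
  exact: subO_mble.
by move=> x [n _ <-]; apply: sA; exists n.
Qed.

Lemma sec_pre U : open U ->
  sec @^-1` U = (~` (pif @` (~` U))) `|` (sec @^-1` U `&` range a).
Proof.
move=> oU; apply/seteqP; split => x.
  move=> Ux; have [ax|nax] := pselect (range a x); first by right.
  left => -[y nUy yx]; apply: nUy.
  by rewrite (uniq _ nax _ _ yx (secK x)).
case=> [nx|[]//]; rewrite /preimage /=.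
apply: contrapT => nU; apply: nx; exists (sec x) => //; exact: secK.
Qed.

Lemma closed_img U : open U -> closed (pif @` (~` U)).
Proof.
move=> oU; apply: compact_closed => //; apply: continuous_compact.
  exact: continuous_subspaceT.
rewrite -(setTI (~` U)); apply: compact_closedI => //.
exact: open_closedC.
Qed.

Lemma sec_mble : measurable_fun [set: borel X] (sec : borel X -> borel Xf).
Proof.
apply: (@measurability _ _ (borel X) (borel Xf) setT sec (@open Xf) erefl).
move=> _ [U oU <-]; rewrite setTI (sec_pre _ oU).
apply: measurableU.
  apply: open_mble; apply: closed_openC; exact: (closed_img _ oU).
by apply: subO_mble => x [].
Qed.

Lemma sec_cont x : ~ range a x -> {for x, continuous sec}.
Proof.
move=> nax U /=; rewrite nbhsE => -[U' [oU' U'x] U'U].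
rewrite nbhsE; exists (~` (pif @` (~` U'))).
  split; first by apply: closed_openC; exact: (closed_img _ oU').
  move=> [y nU'y yx]; apply: nU'y; by rewrite (uniq _ nax _ _ yx (secK x)).
move=> z nz; apply: U'U; apply: contrapT => nU; apply: nz.
by exists (sec z) => //; exact: secK.
Qed.


Lemma pre_mble (B : set (borel X)) : measurable B ->
  measurable ((pif @^-1` B) : set (borel Xf)).
Proof. by move=> mB; have := cont_mfun _ _ _ cpif measurableT _ mB; rewrite setTI. Qed.

Lemma sec_pre_mble (B : set (borel Xf)) : measurable B ->
  measurable ((sec @^-1` B) : set (borel X)).
Proof. by move=> mB; have := sec_mble measurableT _ mB; rewrite setTI. Qed.

Definition secM : {mfun borel X >-> borel Xf} := mfun_Sub (mem_set sec_mble).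

Lemma push_exists (mu : prob X R) : exists nu : prob Xf R,
  forall B, measurable B -> nu B = mu (sec @^-1` B).
Proof. by exists (distribution mu secM). Qed.

Lemma push_pushes (mu : prob X R) (nu : prob Xf R) :
  (forall B, measurable B -> nu B = mu (sec @^-1` B)) -> pushes pif nu mu.
Proof.
move=> h A mA; rewrite h; last exact: pre_mble.
by congr (mu _); apply/seteqP; split => x /=; rewrite secK.
Qed.

Lemma push_uniq (mu : prob X R) (nu : prob Xf R) : nonatomic mu ->
  pushes pif nu mu -> forall B, measurable B -> nu B = mu (sec @^-1` B).
Proof.
move=> na hp B mB.
have mO : measurable (range a : set (borel X)) by exact: subO_mble.
have mP := pre_mble _ mO.
have nuP : nu (pif @^-1` range a) = 0%E by rewrite hp // O_null.
have msB := sec_pre_mble _ mB.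
rewrite (@measureD0 _ _ _ nu _ _ mB mP nuP) (@measureD0 _ _ _ mu _ _ msB mO (O_null _ na)).
have -> : B `\` pif @^-1` range a = pif @^-1` (sec @^-1` B `\` range a).
  apply/seteqP; split => y [By nPy]; rewrite /preimage /=.
    by split => //; rewrite -(uniq _ nPy _ _ erefl (secK _)).
  by rewrite {1}(uniq _ nPy _ _ erefl (secK _)).
apply: hp; exact: measurableD.
Qed.


Lemma cont_bnd (T : ptopologicalType) (g : T -> R) : compact [set: T] ->
  continuous g -> exists M, forall y, `|g y| <= M.
Proof.
move=> cT cg.
have := compact_bounded (continuous_compact (continuous_subspaceT cg) cT).
move=> [M0 [_ HM]]; exists (M0 + 1) => y.
by apply: (HM (M0 + 1)); [lra | exists y].
Qed.

Lemma integ_push (mu : prob X R) (nu : prob Xf R) (g : Xf -> R) M :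
  nonatomic mu -> pushes pif nu mu -> continuous g -> (forall y, `|g y| <= M) ->
  integ nu g = integ mu (g \o sec).
Proof.
move=> na hp cg hg; rewrite /integ; congr fine.
rewrite (eq_measure_integral (distribution mu secM)); last first.
  by move=> A mA _; exact: (push_uniq mu nu na hp A mA).
rewrite integral_distribution //.
  by apply/measurable_EFinP; exact: cont_mfunR.
apply: (bnd_int mu (g \o sec) M) => //.
  apply: (@measurableT_comp _ _ _ (borel X) (borel Xf) _ g setT sec); [exact: cont_mfunR | exact: sec_mble].
by move=> x; exact: hg.
Qed.

Lemma weak_cont (Phi : prob X R -> prob Xf R) :
  (forall mu, nonatomic mu -> pushes pif (Phi mu) mu) ->
  weak_continuous_on (@nonatomic R X) Phi.
Proof.
move=> hPhi mu namu n gs eps cgs eps0.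
have e2 : 0 < eps / 2 by exact: divr_gt0.
have hb i : exists M, forall y, `|gs i y| <= M by exact: cont_bnd.
have [Mb hMb] := choice hb.
pose F i := gs i \o sec.
have mF i : measurable_fun [set: borel X] (F i).
  apply: (@measurableT_comp _ _ _ (borel X) (borel Xf) _ (gs i) setT sec).
    exact: cont_mfunR.
  exact: sec_mble.
have bF i x : `|F i x| <= Mb i by exact: hMb.
have mFn i : measurable_fun [set: borel X] (fun x => - F i x).
  exact: measurableT_comp (@oppr_measurable R setT) (mF i).
have bFn i x : `|- F i x| <= Mb i by rewrite normrN.
have cF i x : ~ range a x -> {for x, continuous (F i)}.
  by move=> nax; apply: continuous_comp; [exact: sec_cont | exact: cgs].
have cFn i x : ~ range a x -> {for x, continuous (fun x => - F i x)}.
  by move=> nax; apply: cvgN; exact: cF.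
have mO : measurable (range a : set (borel X)) by exact: subO_mble.
have O0 := O_null mu namu.
have hk i : exists k : nat, integ mu (env (F i) k%:R) < integ mu (F i) + eps / 2.
  exact: (env_int mu (F i) (Mb i) (range a) mO O0 (mF i) (bF i) (cF i)).
have hl i : exists k : nat,
    integ mu (env (fun x => - F i x) k%:R) < integ mu (fun x => - F i x) + eps / 2.
  exact: (env_int mu _ (Mb i) (range a) mO O0 (mFn i) (bFn i) (cFn i)).
have [kk hkk] := choice hk; have [ll hll] := choice hl.
pose hs (j : 'I_(n + n)) : X -> R := match fintype.split j with
  | inl i => env (F i) (kk i)%:R | inr i => env (fun x => - F i x) (ll i)%:R end.
exists (n + n)%N, hs, (eps / 2); split => //.
  by move=> j; rewrite /hs; case: (fintype.split j) => i; apply: env_cont;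
    [exact: bF | exact: ler0n | exact: bFn | exact: ler0n].
move=> mu' namu' close i.
have c1 := close (unsplit (inl i)); have c2 := close (unsplit (inr i)).
have E2 : fintype.split (rshift n i) = inr i := unsplitK (inr i : 'I_n + 'I_n).
rewrite /hs unsplitK in c1; rewrite /hs /= E2 in c2.
rewrite (integ_push mu' (Phi mu') (gs i) (Mb i) namu' (hPhi mu' namu') (cgs i) (hMb i)).
rewrite (integ_push mu (Phi mu) (gs i) (Mb i) namu (hPhi mu namu) (cgs i) (hMb i)).
have menv (G : X -> R) k M : (forall x, `|G x| <= M) -> 0 <= k ->
    measurable_fun [set: borel X] (env G k).
  by move=> hG k0; apply: cont_mfunR; exact: (env_cont G M hG).
have A1 : integ mu' (F i) <= integ mu' (env (F i) (kk i)%:R).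
  apply: (integ_le mu' _ _ (Mb i) (Mb i)) => //.
  - by apply: (menv _ _ (Mb i)) => //; exact: ler0n.
  - by move=> x; apply: (env_bnd _ _ (bF i)); exact: ler0n.
  - by move=> x; apply: (env_ge _ _ (bF i)); exact: ler0n.
have A2 : integ mu' (fun x => - F i x) <= integ mu' (env (fun x => - F i x) (ll i)%:R).
  apply: (integ_le mu' _ _ (Mb i) (Mb i)) => //.
  - by apply: (menv _ _ (Mb i)) => //; exact: ler0n.
  - by move=> x; apply: (env_bnd _ _ (bFn i)); exact: ler0n.
  - by move=> x; apply: (env_ge _ _ (bFn i)); exact: ler0n.
rewrite (integ_opp mu' (F i) (Mb i) (mF i) (bF i)) in A2.
have h2 := hll i; rewrite (integ_opp mu (F i) (Mb i) (mF i) (bF i)) in h2.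
have h1 := hkk i.
move: c1 c2; rewrite !ltr_norml => /andP[c1 c1'] /andP[c2 c2'].
apply/andP; split; rewrite /F /= in A1 A2 h1 h2 c1 c1' c2 c2' *; lra.
Qed.

Lemma part1_main (mu : prob X R) : nonatomic mu ->
  (exists nu : prob Xf R, pushes pif nu mu) /\
  (forall nu1 nu2 : prob Xf R, pushes pif nu1 mu -> pushes pif nu2 mu ->
     same_measure nu1 nu2).
Proof.
move=> na; split.
  have [nu hnu] := push_exists mu; exists nu; exact: push_pushes.
move=> nu1 nu2 h1 h2 B mB.
by rewrite (push_uniq mu nu1 na h1 B mB) (push_uniq mu nu2 na h2 B mB).
Qed.

End part1.

Theorem lemma3p5 (R : realType) (Gamma : groupType) (X Xf : pseudoPMetricType R)
  (act : Gamma -> X -> X) (actf : Gamma -> Xf -> Xf)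
  (x1 : X) (f : X -> R) (pif : Xf -> X) :
  (* Gamma countably infinite *)
  (exists e : nat -> Gamma, bijective e) ->
  (* X compact metrizable (Hausdorff pseudometric), minimal continuous action with more than one gorbit *)
  hausdorff_space X -> compact [set: X] ->
  is_action act -> minimal_action act ->
  (exists x y : X, ~ gorbit act x y) ->
  (* x1 has trivial stabilizer *)
  (forall g : Gamma, act g x1 = x1 -> g = 1%g) ->
  (* f : X \ {x1} -> {1,-1} continuous, not continuously extendable to X *)
  {within ~` [set x1], continuous f} ->
  (forall x, x <> x1 -> f x = 1 \/ f x = -1) ->
  ~ (exists F : X -> R, [/\ continuous F,
        (forall x, F x = 1 \/ F x = -1) & (forall x, x <> x1 -> F x = f x)]) ->
  (* McMahon's extension X_f with factor map pi_f *)
  hausdorff_space Xf -> compact [set: Xf] ->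
  is_action actf -> minimal_action actf ->
  continuous pif ->
  (forall x, exists y, pif y = x) ->
  (forall g y, pif (actf g y) = act g (pif y)) ->
  (forall x, ~ gorbit act x1 x -> exists! y, pif y = x) ->
  (forall x, gorbit act x1 x ->
     exists y1 y2, y1 <> y2 /\ forall y, pif y = x <-> (y = y1 \/ y = y2)) ->
  (exists h : Xf -> R, [/\ continuous h, (forall y, h y = 1 \/ h y = -1) &
        (forall y, pif y <> x1 -> h y = f (pif y))]) ->
  (* conclusion *)
  (forall mu : prob X R, nonatomic mu ->
     (exists nu : prob Xf R, pushes pif nu mu) /\
     (forall nu1 nu2 : prob Xf R, pushes pif nu1 mu -> pushes pif nu2 mu ->
        same_measure nu1 nu2)) /\
  (forall Phi : prob X R -> prob Xf R,
     (forall mu, nonatomic mu -> pushes pif (Phi mu) mu) ->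
     weak_continuous_on (@nonatomic R X) Phi).
Proof.
move=> [e [e' ee' e'e]] hX cX _ _ _ _ _ _ _ hXf cXf _ _ cpif surj _ huniq _ _.
pose a n := act (e n) x1.
have uniq : forall x, ~ range a x -> forall y y', pif y = x -> pif y' = x -> y = y'.
  move=> x nax y y' hy hy'.
  have ng : ~ gorbit act x1 x.
    by move=> [g _ gx]; apply: nax; exists (e' g) => //; rewrite /a e'e.
  have [y0 [_ u]] := huniq x ng.
  by rewrite -(u y hy); exact: (u y' hy').
split.
  by move=> mu na; exact: (@part1_main R X Xf pif a cpif hX cXf surj uniq mu na).
by move=> Phi hPhi; exact: (@weak_cont R X Xf pif a cpif hX cXf surj uniq Phi hPhi).
Qed.
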